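(* Let $v:\mathbb X\times\mathbb X\to[0,\infty]$ be a measurable symmetric pair potential, $z:\mathbb X\to[0,\infty)$ measurable with $\int_Bz\,d\lambda<\infty$ for all $B\in\mathcal X_{\mathsf b}$, and $\mathsf P\in\mathscr G(z)$. Let $h:\mathbb X\to[0,\infty)$ be measurable with $\int_{\mathbb X}h\,d\lambda_z<\infty$, and let $\mathsf P_h$ be the probability measure absolutely continuous with respect to $\mathsf P$ with $$\frac{d\mathsf P_h}{d\mathsf P}(\eta)=\frac{\exp(-\int_{\mathbb X}h\,d\eta)}{\int_{\mathcal N}\exp(-\int_{\mathbb X}h\,d\gamma)\,d\mathsf P(\gamma)}.$$ Then $\mathsf P_h\in\mathscr G(ze^{-h})$.
   Context: $(\mathbb X,\mathrm{dist})$ complete separable metric space with Borel $\sigma$-algebra $\mathcal X$, $\mathcal X_{\mathsf b}$ bounded Borel sets, $\lambda$ a measure finite on bounded sets, $\lambda_z(dx)=z(x)\lambda(dx)$. $\mathcal N$ is the set of locally finite counting measures on $\mathbb X$ with the $\sigma$-algebra $\mathfrak N$ generated by $\eta\mapsto\eta(B)$, $B\in\mathcal X_{\mathsf b}$. $W(x;\eta)=\int v(x,y)\,d\eta(y)$. For an activity $\zeta:\mathbb X\to[0,\infty)$, $\mathscr G(\zeta)$ is the set of probability measures $\mathsf Q$ on $(\mathcal N,\mathfrak N)$ with $\mathsf E_{\mathsf Q}[\int F(x,\eta)\,d\eta(x)]=\int\mathsf E_{\mathsf Q}[F(x,\eta+\delta_x)e^{-W(x;\eta)}]\zeta(x)\,d\lambda(x)$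 for all measurable $F:\mathbb X\times\mathcal N\to[0,\infty)$. *)

(* Defs.v *)
From HB Require Import structures.
From mathcomp Require Import all_boot all_order all_algebra.
From mathcomp Require Import all_classical all_reals all_analysis.
From mathcomp Require Import measurable_realfun.

Set Implicit Arguments.
Unset Strict Implicit.
Unset Printing Implicit Defensive.

Import Order.TTheory GRing.Theory Num.Theory.

Local Open Scope classical_set_scope.
Local Open Scope ring_scope.

Section metric_setting.
Context {d : measure_display} {X : measurableType d} {R : realType}.
Variable dist : X -> X -> R.

Definition dball (x : X) (r : R) : set X := [set y | dist x y < r].

Definition dopen (U : set X) : Prop :=
  forall x, U x -> exists2 e : R, 0 < e & dball x e `<=` U.

Definition complete_separable_borel : Prop :=
  (forall x y, dist x y = 0 <-> x = y) /\
  (forall x y, dist x y = dist y x) /\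
  (forall x y z, dist x z <= dist x y + dist y z) /\
  [/\
      (exists D : set X, countable D /\
          forall x (e : R), 0 < e -> exists2 y, D y & dist x y < e),
      (forall u : nat -> X,
          (forall e : R, 0 < e -> exists N, forall m n, (N <= m)%N -> (N <= n)%N ->
              dist (u m) (u n) < e) ->
          exists l, forall e : R, 0 < e -> exists N, forall n, (N <= n)%N ->
              dist (u n) l < e) &
      @measurable _ X = <<s dopen >> ].

Definition dbounded (B : set X) : Prop := exists (x : X) (r : R), B `<=` dball x r.

End metric_setting.

Section counting.
Local Open Scope ereal_scope.
Context {d : measure_display} {X : measurableType d} {R : realType}.
Variable dist : X -> X -> R.

Definition is_counting (mu : {measure set X -> \bar R}) : Prop :=
  forall A, measurable A -> mu A = +oo \/ exists n : nat, mu A = n%:R%:E.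

Definition is_locally_finite (mu : {measure set X -> \bar R}) : Prop :=
  forall B, measurable B -> dbounded dist B -> mu B < +oo.

Record lfcm := LFCM {
  lfcm_meas :> {measure set X -> \bar R} ;
  lfcm_count : is_counting lfcm_meas ;
  lfcm_locfin : is_locally_finite lfcm_meas }.

Lemma mzero_lfcm_count : is_counting (@mzero d X R).
Proof. by move=> A _; right; exists 0%N. Qed.

Lemma mzero_lfcm_locfin : is_locally_finite (@mzero d X R).
Proof. by move=> B _ _; rewrite /mzero ltry. Qed.

Definition lfcm0 : lfcm := LFCM mzero_lfcm_count mzero_lfcm_locfin.

HB.instance Definition _ := gen_eqMixin lfcm.
HB.instance Definition _ := gen_choiceMixin lfcm.
HB.instance Definition _ := isPointed.Build lfcm lfcm0.

Lemma addpt_count (eta : lfcm) (x : X) :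
  is_counting (measure_add eta (\d_x)%R).
Proof.
move=> A mA; rewrite /= /msum 2!big_ord_recl/= big_ord0 adde0.
case: (lfcm_count eta mA) => [Einf|[n En]].
  by left; rewrite Einf.
right; exists (n + (x \in A))%N; rewrite En /dirac indicE -EFinD natrD.
by case: (x \in A).
Qed.

Lemma addpt_locfin (eta : lfcm) (x : X) :
  is_locally_finite (measure_add eta (\d_x)%R).
Proof.
move=> B mB bB; rewrite /= /msum 2!big_ord_recl/= big_ord0 adde0 /dirac.
by apply: lte_add_pinfty; [exact: lfcm_locfin|rewrite ltry].
Qed.

Definition addpt (eta : lfcm) (x : X) : lfcm :=
  LFCM (addpt_count eta x) (addpt_locfin eta x).

Definition lfcm_ev (B : set X) (eta : lfcm) : \bar R := eta B.

Definition lfcm_measurable : set (set lfcm) :=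
  <<s \bigcup_(B in [set B | measurable B /\ dbounded dist B])
        preimage_set_system [set: lfcm] (lfcm_ev B) (@measurable _ (\bar R)) >>.

Definition lfcm_display : measure_display.
Proof. by constructor. Qed.

HB.instance Definition _ :=
  @isMeasurable.Build lfcm_display lfcm lfcm_measurable
    (@sigma_algebra0 _ setT _)
    (fun A (hA : lfcm_measurable A) =>
       eq_ind _ (fun S => lfcm_measurable S) (sigma_algebraCD hA) _ (setTD A))
    (@sigma_algebra_bigcup _ setT _).

End counting.

Section gibbs.
Local Open Scope ereal_scope.
Context {d : measure_display} {X : measurableType d} {R : realType}.

Definition Wpot (v : X -> X -> \bar R) (x : X) (eta : {measure set X -> \bar R}) : \bar R :=
  \int[eta]_y v x y.

(** G(zeta): probability measures Q on N satisfying the GNZ equation. *)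
Definition is_gibbs (dist : X -> X -> R) (lambda : {measure set X -> \bar R})
    (v : X -> X -> \bar R) (zeta : X -> R)
    (Q : probability (@lfcm d X R dist) R) : Prop :=
  forall F : X * lfcm dist -> \bar R,
    measurable_fun [set: X * lfcm dist] F -> (forall p, 0 <= F p) ->
    \int[Q]_eta (\int[lfcm_meas eta]_x F (x, eta)) =
    \int[lambda]_x ((\int[Q]_eta (F (x, addpt eta x) *
                                  expeR (- Wpot v x (lfcm_meas eta)))) * (zeta x)%:E).

End gibbs.

Arguments is_gibbs {d X R} dist lambda v zeta Q.

(* Main.v *)
Require Import Defs.
From HB Require Import structures.
From mathcomp Require Import all_boot all_order all_algebra.
From mathcomp Require Import all_classical all_reals all_analysis.
From mathcomp Require Import measurable_realfun.
From mathcomp Require Import lra.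

Import Order.TTheory GRing.Theory Num.Theory.
Local Open Scope classical_set_scope.
Local Open Scope ring_scope.
Local Open Scope ereal_scope.
Import HBNNSimple.


Section stepA.
Context (d : measure_display) (X : measurableType d) (R : realType)
  (dist : X -> X -> R).
Hypothesis hd : complete_separable_borel dist.

Lemma evB (B : set X) : measurable B -> dbounded dist B ->
  measurable_fun [set: lfcm dist] (fun eta : lfcm dist => lfcm_meas eta B).
Proof.
move=> mB bB _ Y mY; rewrite setTI.
apply: sub_gen_smallest; exists B => //.
by exists Y => //; rewrite setTI.
Qed.

Lemma ball_meas (x0 : X) (r : R) : measurable (dball dist x0 r).
Proof.
case: hd => _ [_ [tri [_ _ hm]]].
rewrite hm; apply: sub_gen_smallest => y; rewrite /dball /= => hy.
exists (r - dist x0 y)%R; first by rewrite subr_gt0.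
move=> w; rewrite /dball /= => hw.
have := tri x0 y w; lra.
Qed.

Lemma ball_bounded (x0 : X) (r : R) : dbounded dist (dball dist x0 r).
Proof. by exists x0, r. Qed.

Lemma ball_cover (x0 : X) (y : X) : exists n : nat, dball dist x0 n%:R y.
Proof. by exists (Num.truncn (dist x0 y)).+1; exact: truncnS_gt. Qed.

Lemma ball_nd (x0 : X) : {homo (fun n : nat => dball dist x0 n%:R) : n m / (n <= m)%N >-> n `<=` m}.
Proof.
move=> n m nm y; rewrite /dball /= => h; apply: (lt_le_trans h).
by rewrite ler_nat.
Qed.

Lemma evA (A : set X) : measurable A ->
  measurable_fun [set: lfcm dist] (fun eta : lfcm dist => lfcm_meas eta A).
Proof.
move=> mA.
case: (pselect (exists x, A x)) => [[x0 Ax0]|nA]; last first.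
  have -> : A = set0 by apply/seteqP; split => // y Ay; apply: nA; exists y.
  by under eq_fun do rewrite measure0; exact: measurable_cst.
apply: (emeasurable_fun_cvg (fun n (eta : lfcm dist) => lfcm_meas eta (A `&` dball dist x0 n%:R))).
  move=> n; apply: evB; first by apply: measurableI => //; exact: ball_meas.
  by exists x0, n%:R => y [].
move=> eta _.
have eA : \bigcup_n (A `&` dball dist x0 n%:R) = A.
  rewrite -setI_bigcupr; apply/setIidl => y _.
  by have [n hn] := ball_cover x0 y; exists n.
have := @nondecreasing_cvg_mu _ _ _ (lfcm_meas eta) (fun n => A `&` dball dist x0 n%:R).
rewrite eA; apply => //.
- by move=> n; apply: measurableI => //; exact: ball_meas.
- move=> n m nm; apply/subsetPset; apply: setIS; exact: ball_nd.
Qed.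

Definition idker (eta : lfcm dist) : {measure set X -> \bar R} := lfcm_meas eta.

Let midker (U : set X) : measurable U -> measurable_fun [set: lfcm dist] (idker ^~ U).
Proof. exact: evA. Qed.

HB.instance Definition _ := isKernel.Build _ _ _ _ R idker midker.

Lemma xsec_meas (A : set (lfcm dist * X)) : measurable A ->
  measurable_fun [set: lfcm dist] (fun eta : lfcm dist => lfcm_meas eta (xsection A eta)).
Proof.
move=> mA.
case: (pselect (exists x : X, True)) => [[x0 _]|nX]; last first.
  apply: (eq_measurable_fun (fun _ => 0)).
    move=> eta _; have -> : xsection A eta = set0.
      by apply/seteqP; split => // y; exfalso; apply: nX; exists y.
    by rewrite measure0.
  exact: measurable_cst.
apply: (emeasurable_fun_cvg (fun n (eta : lfcm dist) =>
   mrestr (idker eta) (ball_meas x0 n%:R) (xsection A eta))).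
  move=> n.
  have := @measurable_prod_subset_xsection_kernel _ _ _ _ _ idker _ (ball_meas x0 n%:R).
  move=> /(_ _ A mA) [] //.
  move=> eta; exists (fine (lfcm_meas eta (dball dist x0 n%:R)) + 1)%R => Y mY.
  have fin : lfcm_meas eta (dball dist x0 n%:R) \is a fin_num.
    rewrite ge0_fin_numE//; apply: lfcm_locfin; [exact: ball_meas|exact: ball_bounded].
  rewrite /mrestr /idker.
  apply: (@le_lt_trans _ _ (lfcm_meas eta (dball dist x0 n%:R))).
    apply: le_measure; last exact: subIsetr.
    - by rewrite inE; apply: measurableI => //; exact: ball_meas.
    - by rewrite inE; exact: ball_meas.
  by rewrite -(fineK fin) lte_fin ltrDl.
move=> eta _; rewrite /mrestr /idker.
have eA : \bigcup_n (xsection A eta `&` dball dist x0 n%:R) = xsection A eta.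
  rewrite -setI_bigcupr; apply/setIidl => y _.
  by have [n hn] := ball_cover x0 y; exists n.
have := @nondecreasing_cvg_mu _ _ _ (lfcm_meas eta) (fun n => xsection A eta `&` dball dist x0 n%:R).
rewrite eA; apply => //.
- by move=> n; apply: measurableI; [exact: measurable_xsection|exact: ball_meas].
- exact: measurable_xsection.
- move=> n m nm; apply/subsetPset; apply: setIS; exact: ball_nd.
Qed.

Lemma single_meas (k : X -> \bar R) : measurable_fun [set: X] k -> (forall x, 0 <= k x) ->
  measurable_fun [set: lfcm dist] (fun eta : lfcm dist => \int[lfcm_meas eta]_x k x).
Proof. by move=> mk k0; exact: (@measurable_fun_integral_kernel _ _ _ _ _ idker midker). Qed.

Lemma joint_meas (F : X * lfcm dist -> \bar R) : measurable_fun [set: X * lfcm dist] F ->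
  (forall p, 0 <= F p) ->
  measurable_fun [set: lfcm dist] (fun eta : lfcm dist => \int[lfcm_meas eta]_x F (x, eta)).
Proof.
move=> mF F0.
pose K := F \o (@unstable.swap (lfcm dist) X).
have mK : measurable_fun [set: lfcm dist * X] K.
  by apply: measurableT_comp => //; exact: measurable_swap.
apply: (measurable_fun_xsection_integral K idker (nnsfun_approx measurableT mK)).
- exact: nd_nnsfun_approx.
- by move=> z; apply: cvg_nnsfun_approx => // ? _; exact: F0.
- by move=> n r; apply: xsec_meas.
Qed.

Lemma addpt_meas (x : X) : measurable_fun [set: lfcm dist] (fun eta : lfcm dist => addpt eta x).
Proof.
apply: (measurability (\bigcup_(B in [set B | measurable B /\ dbounded dist B])
        preimage_set_system [set: lfcm dist] (lfcm_ev B) (@measurable _ (\bar R)))).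
  by [].
move=> _ [_ [B [mB bB] [Y mY <-]] <-].
have -> : [set: lfcm dist] `&` (fun eta : lfcm dist => addpt eta x) @^-1` ([set: lfcm dist] `&` lfcm_ev B @^-1` Y)
  = [set: lfcm dist] `&` (fun eta : lfcm dist => lfcm_meas eta B + \d_x B) @^-1` Y.
  apply/seteqP; split => eta /=; rewrite /lfcm_ev /= /msum 2!big_ord_recl/= big_ord0 adde0.
  - by move=> [_ [_ h]].
  - by move=> [_ h].
by apply: emeasurable_funD => //; exact: evB.
Qed.

End stepA.


Lemma cov d (T : measurableType d) (R : realType) (mu nu : {measure set T -> \bar R})
  (g : T -> \bar R) :
  measurable_fun setT g -> (forall x, 0 <= g x) -> (forall x, g x \is a fin_num) ->
  (forall A, measurable A -> nu A = \int[mu]_(x in A) g x) ->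
  forall f, measurable_fun setT f -> (forall x, 0 <= f x) ->
  \int[nu]_x f x = \int[mu]_x (f x * g x).
Proof.
move=> mg g0 gfin gint f mf f0.
pose E := [set: T]; have mE : measurable E by exact: measurableT.
pose h := nnsfun_approx mE mf.
have -> : \int[nu]_(x in E) f x =
    lim (\int[nu]_(x in E) (EFin \o h n) x @[n --> \oo]).
  have fE x : E x -> f x = lim ((EFin \o h n) x @[n --> \oo]).
    by move=> Ex; apply/esym/cvg_lim => //; exact: cvg_nnsfun_approx.
  under eq_integral => x /[!inE] /fE -> //.
  apply: monotone_convergence => //.
  - move=> n; apply/measurable_EFinP.
    by apply: (measurable_funS measurableT) => //; exact/measurable_funP.
  - by move=> n x Ex //=; rewrite lee_fin.
  - by move=> x Ex a b ab; rewrite lee_fin; exact/lefP/nd_nnsfun_approx.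
have -> : \int[mu]_(x in E) (f \* g) x =
    lim (\int[mu]_(x in E) ((EFin \o h n) \* g) x @[n --> \oo]).
  have fg x : E x -> f x * g x = lim (((EFin \o h n) \* g) x @[n --> \oo]).
    by move=> Ex; apply/esym/cvg_lim => //; apply: cvgeZr;
      [exact: gfin|exact: cvg_nnsfun_approx].
  under eq_integral => x /[!inE] /fg -> //.
  apply: monotone_convergence => [//| | |].
  - move=> n; apply/emeasurable_funM; last exact: mg.
    by apply/measurable_EFinP; exact: measurable_funPT.
  - by move=> n x Ex /=; rewrite mule_ge0 ?lee_fin ?g0.
  - by move=> x Ex a b ab/=; rewrite lee_wpmul2r ?lee_fin ?g0//; exact/lefP/nd_nnsfun_approx.
suff suf n : \int[mu]_(x in E) ((EFin \o h n) x * g x) =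
    \int[nu]_(x in E) (EFin \o h n) x.
  congr (lim _).
  have -> : (fun n => \int[mu]_(x in E) ((EFin \o h n) x * g x)) = (fun n => \int[nu]_(x in E) (EFin \o h n) x).
    by apply/funext => n; exact: suf.
  by [].
transitivity (\int[nu]_(x in E)
   (\sum_(y \in range (h n)) (y * \1_(h n @^-1` [set y]) x)%:E)); last first.
  by apply: eq_integral => t tE; rewrite /= fimfunE -fsumEFin.
have indich m r : measurable_fun E (fun x => (r * \1_(h m @^-1` [set r]) x)%:E).
  by apply: (measurable_comp measurableT) => //; exact: measurable_funM.
rewrite ge0_integral_fsum//; last by move=> m y Ey; exact: nnfun_muleindic_ge0.
transitivity (\int[mu]_(x in E) (\sum_(y \in range (h n))
    (y * \1_(h n @^-1` [set y]) x)%:E * g x)).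
  under [RHS]eq_integral => x xE.
    rewrite -ge0_mule_fsuml => [|y]; last exact: nnfun_muleindic_ge0.
    rewrite fsumEFin // -(fimfunE _ x); over.
  by [].
rewrite ge0_integral_fsum//; last 2 first.
  - by move=> y; apply: emeasurable_funM.
  - by move=> m y Ey; rewrite mule_ge0 ?g0// nnfun_muleindic_ge0.
apply: eq_fsbigr => r rhn.
under [RHS]eq_integral do rewrite EFinM.
rewrite integralZl_indic_nnsfun => //.
under eq_integral do rewrite EFinM -muleA.
rewrite ge0_integralZl//.
- under eq_integral do rewrite muleC.
  rewrite (eq_integral (g \_ (h n @^-1` [set r]))); last first.
    by move=> x xE; rewrite epatch_indic.
  by rewrite -integral_mkcondr -gint// integral_indic// setIC.
- by apply: emeasurable_funM => //; exact/measurable_EFinP.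
- by move=> t Et; rewrite mule_ge0 ?lee_fin ?g0.
- by move: rhn; rewrite inE => -[t _ <-]; rewrite lee_fin.
Qed.

Lemma mexpN d (T : measurableType d) (R : realType) (f : T -> \bar R) :
  measurable_fun [set: T] f -> (forall t, 0 <= f t) ->
  measurable_fun [set: T] (fun t => expeR (- f t)).
Proof.
move=> mf f0.
rewrite (_ : (fun t => expeR (- f t)) =
   (fun t => if f t \is a fin_num then (expR (- fine (f t)))%:E else 0)); last first.
  by apply/funext => t; case: (f t) (f0 t).
apply: measurable_fun_ifT.
- apply: (measurable_fun_bool true).
  exact: (emeasurable_fin_num measurableT mf).
- apply/measurable_EFinP; apply: measurableT_comp; first exact: measurable_expR.
  apply: measurable_funN; exact: (measurableT_comp (fine_measurable measurableT) mf).
- exact: measurable_cst.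
Qed.

Theorem mainTheorem16 (d : measure_display) (X : measurableType d) (R : realType)
  (dist : X -> X -> R) (lambda : {measure set X -> \bar R})
  (v : X -> X -> \bar R) (z : X -> R) (h : X -> R)
  (P : probability (lfcm dist) R) (Ph : probability (lfcm dist) R) :
  complete_separable_borel dist ->
  (forall B, measurable B -> dbounded dist B -> lambda B < +oo) ->
  measurable_fun [set: X * X] (fun p => v p.1 p.2) ->
  (forall x y, 0 <= v x y) ->
  (forall x y, v x y = v y x) ->
  measurable_fun [set: X] z ->
  (forall x, (0 <= z x)%R) ->
  (forall B, measurable B -> dbounded dist B ->
     \int[lambda]_(x in B) (z x)%:E < +oo) ->
  is_gibbs dist lambda v z P ->
  measurable_fun [set: X] h ->
  (forall x, (0 <= h x)%R) ->
  \int[lambda]_x ((h x)%:E * (z x)%:E) < +oo ->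
  (forall A, measurable A ->
     Ph A = (\int[P]_(eta in A) expeR (- \int[lfcm_meas eta]_x (h x)%:E)) *
            ((fine (\int[P]_gamma expeR (- \int[lfcm_meas gamma]_x (h x)%:E)))^-1)%:E) ->
  is_gibbs dist lambda v (fun x => z x * expR (- h x))%R Ph.
Proof.
move=> hd _ mv v0 _ _ _ _ gibbsP mh h0 _ hPh.
rewrite /is_gibbs => F mF F0.
pose H := fun eta : lfcm dist => \int[lfcm_meas eta]_x (h x)%:E.
pose rho := fun eta : lfcm dist => expeR (- H eta).
pose cst := ((fine (\int[P]_gamma rho gamma))^-1)%R.
pose g := fun eta : lfcm dist => rho eta * cst%:E.
have H0 eta : 0 <= H eta by apply: integral_ge0 => x _; rewrite lee_fin.
have mH : measurable_fun [set: lfcm dist] H.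
  by apply: single_meas => //; exact/measurable_EFinP.
have mrho : measurable_fun [set: lfcm dist] rho by exact: mexpN.
have rho0 eta : 0 <= rho eta by exact: expeR_ge0.
have rhofin eta : rho eta \is a fin_num.
  by rewrite /rho; case: (H eta) (H0 eta).
have cst0 : (0 <= cst)%R.
  by rewrite /cst invr_ge0; apply: fine_ge0; apply: integral_ge0 => eta _.
have g0 eta : 0 <= g eta by rewrite /g mule_ge0 ?lee_fin.
have gfin eta : g eta \is a fin_num by rewrite /g fin_numM.
have mg : measurable_fun [set: lfcm dist] g.
  by apply: emeasurable_funM => //; exact: measurable_cst.
have gint A : measurable A -> Ph A = \int[P]_(x in A) g x.
  move=> mA; rewrite hPh // /g ge0_integralZr //.
  all: try exact: measurable_funTS.
  all: try by rewrite lee_fin.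
have COV := @cov _ _ _ P Ph g mg g0 gfin gint.
have gadd eta x : g (addpt eta x) = g eta * (expR (- h x))%:E.
  rewrite /g /rho.
  have -> : H (addpt eta x) = H eta + (h x)%:E.
    rewrite /H.
    have -> : lfcm_meas (addpt eta x) = measure_add (lfcm_meas eta) \d_x by [].
    rewrite ge0_integral_measure_add //; last 2 first.
    - by move=> y _; rewrite lee_fin.
    - exact/measurable_EFinP.
    rewrite integral_dirac //; last exact/measurable_EFinP.
    by rewrite diracT mul1e.
  rewrite oppeD; last by rewrite fin_num_adde_defl.
  by rewrite expeRD muleAC.
rewrite COV; last 2 first.
- exact: joint_meas.
- by move=> eta; apply: integral_ge0 => x _.
transitivity (\int[P]_eta \int[lfcm_meas eta]_x (F (x, eta) * g eta)).
  apply: eq_integral => eta _; rewrite ge0_integralZr //.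
  exact: (measurableT_comp mF (pair2_measurable eta)).
transitivity (\int[lambda]_x ((\int[P]_eta (F (x, addpt eta x) * g (addpt eta x) *
                expeR (- Wpot v x (lfcm_meas eta)))) * (z x)%:E)).
  apply: (gibbsP (fun p => F p * g p.2)).
  - apply: emeasurable_funM => //.
    exact: (measurableT_comp mg measurable_snd).
  - by move=> p; rewrite mule_ge0.
apply: eq_integral => x _.
have mF' : measurable_fun [set: lfcm dist] (fun eta : lfcm dist => F (x, addpt eta x)).
  apply: (measurableT_comp mF).
  by apply: measurable_fun_pair; [exact: measurable_cst|exact: addpt_meas].
have mW : measurable_fun [set: lfcm dist] (fun eta : lfcm dist => expeR (- Wpot v x (lfcm_meas eta))).
  apply: mexpN; last by move=> eta; apply: integral_ge0 => y _.
  apply: single_meas => //.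
  exact: (measurableT_comp mv (pair1_measurable x)).
rewrite COV; last 2 first.
- exact: emeasurable_funM.
- by move=> eta; rewrite mule_ge0 // expeR_ge0.
have -> : \int[P]_eta (F (x, addpt eta x) * g (addpt eta x) * expeR (- Wpot v x (lfcm_meas eta)))
  = \int[P]_eta (F (x, addpt eta x) * expeR (- Wpot v x (lfcm_meas eta)) * g eta * (expR (- h x))%:E).
  apply: eq_integral => eta _; rewrite gadd.
  by rewrite -!muleA; congr (_ * _); rewrite [RHS]muleC -!muleA.
rewrite ge0_integralZr //.
all: try by rewrite lee_fin expR_ge0.
all: try by move=> eta _; rewrite !mule_ge0 // expeR_ge0.
all: try by apply: emeasurable_funM => //; exact: emeasurable_funM.
by rewrite EFinM [(z x)%:E * _]muleC muleA.
Qed.
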